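(* Let $r>2$. Then \[\sum_{k_1,\dots,k_r=1}^K\hat I_K^{\pm}(k_1)\cdots\hat I_K^{\pm}(k_r)\,q^{-(k_1+\dots+k_r)/2}\sum_{\substack{m\mid\gcd(k_1,\dots,k_r)\\ mp\nmid\gcd(k_1,\dots,k_r)}}\pi(m)m^r=O(1),\] with the bound independent of $K$.
   Context: $q$ is a power of an odd prime $p$; $\pi(m)$ is the number of monic irreducible polynomials of degree $m$ in $\mathbb{F}_q[X]$. $\mathcal{I}=[-\beta/2,\beta/2]$, $0<\beta<1$. $e(x)=e^{2\pi ix}$. For $K\ge1$, $I_K^{\pm}(x)=\sum_{|k|\le K}\hat I_K^{\pm}(k)e(kx)$ are the Beurling–Selberg majorant/minorant trigonometric polynomials of degree $\le K$ of $\chi_{\mathcal{I}}$ (Montgomery, Ten Lectures, Ch. 1.2): $I_K^-\le\chi_{\mathcal{I}}\le I_K^+$, $\int I_K^{\pm}=|\mathcal{I}|\pm\frac1{K+1}$, even, and $|\hat I_K^{\pm}(k)-\hat\chi_{\mathcal{I}}(k)|\le\frac1{K+1}$. *)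

(* Defs.v *)
From HB Require Import structures.
From mathcomp Require Import all_boot all_order all_algebra all_field.
From mathcomp Require Import all_classical all_reals all_analysis.
Set Implicit Arguments. Unset Strict Implicit. Unset Printing Implicit Defensive.
Import Order.TTheory GRing.Theory Num.Theory.
Import numFieldNormedType.Exports.
Local Open Scope classical_set_scope.
Local Open Scope ring_scope.

Definition monic_of (F : fieldType) (m : nat) (c : {ffun 'I_m -> F}) : {poly F} :=
  'X^m + \sum_(i < m) (c i)%:P * 'X^i.

Definition npi (F : finFieldType) (m : nat) : nat :=
  #|[set c : {ffun 'I_m -> F} | `[< irreducible_poly (monic_of c) >] ]|.

(* Indicator of I = [-beta/2, beta/2], on the fundamental domain [-1/2,1/2]. *)
Definition chiI (R : realType) (beta : R) (x : R) : R :=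
  if `|x| <= beta / 2 then 1 else 0.

(* Fourier coefficient of chi_I: int_{-beta/2}^{beta/2} e(-kx) dx; the
   imaginary part vanishes by symmetry, so this is the cosine integral. *)
Definition chihat (R : realType) (beta : R) (k : int) : R :=
  \int[lebesgue_measure]_(x in `[- (beta / 2), beta / 2]) cos (2 * pi * k%:~R * x).

(* The trigonometric polynomial sum_{|k|<=K} a(k) e(kx), for real even
   coefficients a (a(-k) = a(k)), where it equals sum a(k) cos(2 pi k x). *)
Definition tpoly (R : realType) (a : int -> R) (K : nat) (x : R) : R :=
  \sum_(j < (2 * K).+1)
     a (j%:Z - K%:Z) * cos (2 * pi * (j%:Z - K%:Z)%:~R * x).

(* Ihat K = Fourier coefficients of the Beurling-Selberg majorant (s = true)
   resp. minorant (s = false) of degree <= K of chi_I, with the properties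
   listed in the paper. *)
Definition BS_family (R : realType) (beta : R) (s : bool)
    (Ihat : nat -> int -> R) : Prop :=
  forall K : nat, (1 <= K)%N ->
    [/\ (forall k : int, Ihat K (- k) = Ihat K k),
        (forall x : R, - (1/2) <= x <= 1/2 ->
           if s then chiI beta x <= tpoly (Ihat K) K x
           else tpoly (Ihat K) K x <= chiI beta x),
        \int[lebesgue_measure]_(x in `[- (1/2), 1/2]) tpoly (Ihat K) K x
          = beta + (if s then 1 else -1) / K.+1%:R
      & (forall k : int, `|k| <= K%:Z ->
           `|Ihat K k - chihat beta k| <= 1 / K.+1%:R)].

Definition S93 (R : realType) (F : finFieldType) (p r : nat)
    (Ihat : nat -> int -> R) (K : nat) : R :=
  \sum_(k : {ffun 'I_r -> 'I_K})
    (\prod_(i < r) Ihat K (k i).+1%:Z)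
    * ((#|F|%:R : R) `^ (- ((\sum_(i < r) (k i).+1)%N%:R / 2)))
    * (\sum_(m <- divisors (\big[gcdn/0%N]_(i < r) (k i).+1)
             | ~~ (m * p %| \big[gcdn/0%N]_(i < r) (k i).+1)%N)
          (npi F m)%:R * m%:R ^+ r).

(* Main.v *)
Require Import Defs.
From HB Require Import structures.
From mathcomp Require Import all_boot all_order all_algebra all_field.
From mathcomp Require Import all_classical all_reals all_analysis.
From mathcomp Require Import ring lra zify.
Import Order.TTheory GRing.Theory Num.Theory.
Import numFieldNormedType.Exports.
Local Open Scope ring_scope.


Lemma chihat_bound (R : realType) (beta : R) (k : int) : 0 < beta ->
  `|chihat beta k| <= beta.
Proof.
move=> hb; rewrite /chihat.
set c := 2 * pi * k%:~R.


have hint : lebesgue_measure.-integrable `[- (beta / 2), beta / 2]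
    (EFin \o (fun x : R => cos (c * x))).
  apply: continuous_compact_integrable; first exact: segment_compact.
  have hc : continuous (fun x : R => cos (c * x)).
    move=> x; exact: (continuous_comp (@mulrl_continuous R c x) (@continuous_cos R (c * x))).
  by apply: continuous_subspaceT => x; exact: hc.
apply: (le_trans (le_normr_Rintegral _ hint)).
  exact: measurable_itv.
have hint1 : lebesgue_measure.-integrable `[- (beta / 2), beta / 2]
    (EFin \o (fun x : R => `|cos (c * x)|)).
  exact: integrable_norm.
apply: (le_trans (le_Rintegral _ hint1 _ (fun x _ => cos_max (c * x)))).
- exact: measurable_itv.
- apply: continuous_compact_integrable; first exact: segment_compact.
  by apply: continuous_subspaceT => x; exact: cvg_cst.
rewrite Rintegral_cst; last exact: measurable_itv.
rewrite [X in fine X]lebesgue_measure_itv /= lte_fin.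
have h2 : 0 < beta / 2 by rewrite divr_gt0.
rewrite gtrN // mul1r /= opprK -splitr.
by [].

Qed.

Lemma geo_sum_eq (R : realType) (z : R) n :
  (1 - z) * \sum_(j < n) z ^+ j = 1 - z ^+ n.
Proof.
elim: n => [|n IH]; first by rewrite big_ord0 expr0 mulr0 subrr.
by rewrite big_ord_recr /= mulrDr IH exprS; ring.
Qed.

Lemma geo_sum_le (R : realType) (z : R) n : 0 <= z -> z < 1 ->
  \sum_(j < n) z ^+ j <= (1 - z)^-1.
Proof.
move=> z0 z1.
have hp : 0 < 1 - z by rewrite subr_gt0.
rewrite -[X in X <= _](mulKf (lt0r_neq0 hp)) geo_sum_eq.
rewrite ler_pdivrMl // mulrV ?unitfE ?(lt0r_neq0 hp) //.
by rewrite lerBlDr lerDl exprn_ge0.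
Qed.

Lemma bern (R : realType) (t : R) n : 1 <= t -> 1 + n%:R * (t - 1) <= t ^+ n.
Proof.
move=> t1; elim: n => [|n IH]; first by rewrite mul0r addr0 expr0.
rewrite exprS -natr1.
have h : t * (1 + n%:R * (t - 1)) <= t * t ^+ n.
  by rewrite ler_pM2l //; lra.
apply: le_trans h.
have hn : 0 <= n%:R * ((t - 1) * (t - 1)) :> R by rewrite mulr_ge0 // mulr_ge0 //; lra.
nra.
Qed.

Lemma sum_bound (R : realType) (v : R) : 0 <= v -> v < 1 ->
  exists M : R, 0 <= M /\ forall n,
    \sum_(j < n) 2 * (j.+1)%:R ^+ 2 * v ^+ j.+1 <= M.
Proof.
move=> v0 v1.
set d := (1 - v) / 4.
have d0 : 0 < d by rewrite /d divr_gt0 // subr_gt0.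
set t := 1 + d.
set z := t ^+ 2 * v.
have z0 : 0 <= z by rewrite /z mulr_ge0 // exprn_ge0 // /t; lra.
have z1 : z < 1.
  rewrite /z /t /d; set w := 1 - v.
  have -> : v = 1 - w by rewrite /w; ring.
  have w0 : 0 < w by rewrite /w subr_gt0.
  have w1 : w <= 1 by rewrite /w; lra.
  rewrite expr2; nra.
exists (2 / (d ^+ 2) * (1 - z)^-1); split.
  apply: mulr_ge0; first by rewrite divr_ge0 // exprn_ge0 // ltW.
  by rewrite invr_ge0 subr_ge0 ltW.
move=> n.
have key : forall j : nat, 2 * (j.+1)%:R ^+ 2 * v ^+ j.+1 <= 2 / d ^+ 2 * z ^+ j.
  move=> j.
  have hb : j.+1%:R * d <= t ^+ j.+1.
    have t1 : 1 <= t by rewrite /t; lra.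
    have := @bern R t j.+1 t1; rewrite {2}/t addrAC subrr add0r => H.
    apply: le_trans H.
    by rewrite lerDr.
  have hd2 : 0 < d ^+ 2 by rewrite exprn_gt0.
  have e1 : (j.+1)%:R ^+ 2 <= (t ^+ j.+1) ^+ 2 / d ^+ 2.
    rewrite ler_pdivlMr // -exprMn lerXn2r // ?nnegrE //.
      by rewrite mulr_ge0 // ltW.
    by rewrite exprn_ge0 // /t; lra.
  have e2 : (t ^+ j.+1) ^+ 2 * v ^+ j.+1 = z ^+ j.+1.
    by rewrite /z exprMn -!exprM mulnC.
  have e3 : z ^+ j.+1 <= z ^+ j by rewrite exprS ler_piMl // ?exprn_ge0 // ltW.
  rewrite -mulrA [X in _ <= X]mulrAC -mulrA ler_pM2l //.
  apply: le_trans (_ : (t ^+ j.+1) ^+ 2 / d ^+ 2 * v ^+ j.+1 <= _).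
    by rewrite ler_wpM2r ?exprn_ge0.
  by rewrite mulrAC e2 ler_pM2r ?invr_gt0.
apply: (@le_trans _ _ (\sum_(j < n) 2 / d ^+ 2 * z ^+ j)).
  by apply: ler_sum => j _; exact: key.
rewrite -mulr_sumr ler_pM2l ?divr_gt0 ?exprn_gt0 //.
exact: geo_sum_le.
Qed.

Lemma npi_le (F : finFieldType) m : (npi F m <= #|F| ^ m)%N.
Proof.
rewrite /npi; apply: leq_trans (max_card _) _.
by rewrite card_ffun card_ord.
Qed.

Lemma D_bound (R : realType) (F : finFieldType) (p r g : nat) : (0 < g)%N ->
  (\sum_(m <- divisors g | ~~ (m * p %| g)%N) (npi F m)%:R * m%:R ^+ r : R)
    <= (g ^ r.+1 * #|F| ^ g)%N%:R.
Proof.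
move=> g0.
have q0 : (0 < #|F|)%N by apply: leq_trans (finNzRing_gt1 F).
apply: (@le_trans _ _ (\sum_(m <- divisors g) ((#|F| ^ g * g ^ r)%N%:R : R))).
  rewrite big_mkcond /= big_seq [X in _ <= X]big_seq.
  apply: ler_sum => m hm; case: ifP => _; last by rewrite ler0n.
  rewrite -natrX -natrM ler_nat.
  have mg : (m %| g)%N by rewrite dvdn_divisors.
  have mle : (m <= g)%N := dvdn_leq g0 mg.
  apply: leq_mul.
    exact: leq_trans (npi_le F m) (leq_pexp2l q0 mle).
  by elim: (r) => // n IH; rewrite !expnS leq_mul.
rewrite -natr_sum ler_nat big_const_seq count_predT iter_addn_0.
have hs : (size (divisors g) <= g)%N.
  rewrite -[X in (_ <= X)%N](size_iota 1 g).
  apply: uniq_leq_size; first exact: divisors_uniq.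
  move=> m hm; rewrite -dvdn_divisors // in hm.
  rewrite mem_iota (dvdn_gt0 g0 hm) /= add1n ltnS.
  exact: dvdn_leq.
rewrite expnS.
have := leq_mul (leqnn (#|F| ^ g * g ^ r)) hs.
move/leq_trans; apply.
by rewrite [(g * _)%N]mulnC -mulnA mulnC.
Qed.

Theorem lemma9p3 (R : realType) (F : finFieldType) (p : nat)
    (hp : prime p) (hodd : odd p) (hchar : p \in [pchar F])
    (beta : R) (hb0 : 0 < beta) (hb1 : beta < 1)
    (s : bool) (Ihat : nat -> int -> R) (hI : BS_family beta s Ihat)
    (r : nat) (hr : (2 < r)%N) :
  exists C : R, forall K : nat, (1 <= K)%N -> `|S93 F p r Ihat K| <= C.
Proof.
set q := #|F|.
have q1 : (1 < q)%N := finNzRing_gt1 F.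
set qr : R := q%:R.
have qr1 : 1 < qr by rewrite /qr ltr1n.
have qr0 : 0 < qr by lra.
set v := qr `^ (- 6^-1).
have v0 : 0 <= v := powR_ge0 _ _.
have v6 : v ^+ 6 * qr = 1.
  rewrite -(powR_mulrn 6 v0) /v -powRrM.
  have -> : - 6^-1 * 6%:R = -1 :> R by field.
  by rewrite powR_inv1 ?ltW // mulVf // gt_eqF.
have v1 : v < 1.
  rewrite ltNge; apply/negP => hv.
  have : 1 <= v ^+ 6 by rewrite exprn_ege1.
  have : 0 <= v ^+ 6 := exprn_ge0 6 v0.
  move: v6; set w := v ^+ 6 => v6 w0 w1.
  nra.
have [M [M0 HM]] := @sum_bound R v v0 v1.
exists (M ^+ r) => K hK.
have [_ _ _ hIb] := hI K hK.
have Ib : forall j : 'I_K, `|Ihat K (j.+1)%:Z| <= 2.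
  move=> j.
  have hj : `|(j.+1)%:Z| <= K%:Z by rewrite ger0_norm // lez_nat.
  have h1 := hIb _ hj.
  have h2 := @chihat_bound R beta (j.+1)%:Z hb0.
  have h3 : 1 / K.+1%:R <= 1 :> R.
    by rewrite ler_pdivrMr ?ltr0n // mul1r ler1n.
  have := ler_normD (Ihat K (j.+1)%:Z - chihat beta (j.+1)%:Z) (chihat beta (j.+1)%:Z).
  rewrite subrK => h4.
  apply: le_trans h4 _.
  rewrite -[2]/(1 + 1 : R).
  apply: lerD; first exact: le_trans h1 h3.
  by apply: le_trans h2 _; apply: ltW.
rewrite /S93.
apply: le_trans (ler_norm_sum _ _ _) _.
set f := fun j : 'I_K => 2 * (j.+1)%:R ^+ 2 * v ^+ j.+1.
apply: (@le_trans _ _ (\sum_(k : {ffun 'I_r -> 'I_K}) \prod_(i < r) f (k i))).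
  apply: ler_sum => k _.
  set g := \big[gcdn/0%N]_(i < r) (k i).+1.
  set Sa := (\sum_(i < r) (k i).+1)%N.
  have r0 : (0 < r)%N by apply: leq_trans hr.
  pose i0 : 'I_r := Ordinal r0.
  have gdv : forall i : 'I_r, (g %| (k i).+1)%N.
    by move=> i; apply: (biggcdn_inf i) => //; exact: dvdnn.
  have g0 : (0 < g)%N := dvdn_gt0 (ltn0Sn _) (gdv i0).
  have gle : forall i : 'I_r, (g <= (k i).+1)%N.
    by move=> i; exact: dvdn_leq (ltn0Sn _) (gdv i).
  have g3 : (3 * g <= Sa)%N.
    have : (\sum_(i < r) g <= Sa)%N by apply: leq_sum => i _; exact: gle.
    rewrite sum_nat_const card_ord => H.
    apply: leq_trans H; by rewrite leq_mul2r hr orbT.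
  have gpow : (g ^ r.+1 <= (\prod_(i < r) (k i).+1) ^ 2)%N.
    apply: (@leq_trans (g ^ (r * 2))); first by apply: leq_pexp2l => //; rewrite muln2 -addnn -addn1 leq_add2l.
    rewrite expnM leq_exp2r //.
    rewrite -{1}[r]card_ord -prod_nat_const.
    by apply: leq_prod => i _; exact: gle.
  have eP : `|\prod_(i < r) Ihat K (k i).+1%:Z| <= 2 ^+ r.
    rewrite normr_prod -[X in _ <= X ^+ _]/(2 : R).
    rewrite -[X in _ <= _ ^+ X](card_ord r) -prodr_const.
    by apply: ler_prod => i _; rewrite normr_ge0 Ib.
  have eW : qr `^ (- (Sa%:R / 2)) = v ^+ (3 * Sa).
    rewrite -(powR_mulrn _ v0) /v -powRrM natrM.
    by congr (_ `^ _); field.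
  have eD := @D_bound R F p r g g0.
  have D0 : 0 <= \sum_(m <- divisors g | ~~ (m * p %| g)%N) (npi F m)%:R * m%:R ^+ r :> R.
    by apply: sumr_ge0 => m _; rewrite mulr_ge0 // exprn_ge0.
  rewrite !normrM [X in _ * X]ger0_norm; last first.
    by apply: sumr_ge0 => m _; rewrite mulr_ge0 // exprn_ge0.
  rewrite [X in _ * X * _]ger0_norm ?powR_ge0 //.
  rewrite -/qr eW.
  apply: (@le_trans _ _ (2 ^+ r * v ^+ (3 * Sa) * (g ^ r.+1 * q ^ g)%:R)).
    apply: ler_pM; [| by apply: sumr_ge0 => m _; rewrite mulr_ge0 // exprn_ge0 | | exact: eD].
      by rewrite mulr_ge0 // exprn_ge0.
    by apply: ler_wpM2r; [exact: exprn_ge0 | exact: eP].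
  have h6a : (6 * g <= 2 * Sa)%N by rewrite -[6%N]/(2 * 3)%N -mulnA leq_mul2l g3 orbT.
  have h6 : (6 * g <= 3 * Sa)%N by apply: leq_trans h6a _; rewrite leq_mul2r orbT.
  have h7 : (Sa <= 3 * Sa - 6 * g)%N.
    rewrite leq_subRL //.
    have -> : (3 * Sa = 2 * Sa + Sa)%N by rewrite (mulSnr 2).
    by rewrite leq_add2r.
  have eL : v ^+ (3 * Sa) * (g ^ r.+1 * q ^ g)%:R = v ^+ (3 * Sa - 6 * g) * (g ^ r.+1)%:R.
    rewrite natrM (natrX _ q g) -/qr.
    rewrite {1}(_ : (3 * Sa = (3 * Sa - 6 * g) + 6 * g)%N); last by rewrite subnK.
    rewrite exprD exprM -mulrA; congr (_ * _).
    by rewrite mulrCA -exprMn v6 expr1n mulr1.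
  rewrite -mulrA eL /f !big_split /=.
  have e2 : \prod_(i < r) (2 : R) = 2 ^+ r.
    by rewrite prodr_const card_ord.
  rewrite prodrXr -/Sa e2 -natr_prod -natrM.
  rewrite -mulrA ler_pM2l ?exprn_gt0 // [X in _ <= X]mulrC.
  apply: ler_pM; [exact: exprn_ge0 | exact: ler0n | | ].
    by apply: ler_wiXn2l => //; exact: ltW.
  by rewrite ler_nat mulnn.
rewrite -(bigA_distr_bigA (fun (_ : 'I_r) (j : 'I_K) => f j)) /=.
rewrite prodr_const card_ord.
apply: lerXn2r; rewrite ?nnegrE //; last exact: HM.
apply: sumr_ge0 => j _; rewrite /f; apply: mulr_ge0; last exact: exprn_ge0.
by rewrite mulr_ge0 // exprn_ge0.
Qed.
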